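(* Under the hypotheses of the conformal-measure theorem described in the context, assume additionally that $\phi$ satisfies (H1). Then for a.e. $\omega$, every $n\ge1$, every $w=(w_0,\dots,w_{n-1})\in\mathcal W^n_\omega$ and every $x\in[w]_\omega$, $$\frac{\mu_{\theta^n\omega}(T_{\theta^{n-1}\omega}[w_{n-1}]_{\theta^{n-1}\omega})}{B_{\theta^n\omega}}\le\Lambda_n(\omega)\frac{\mu_\omega([w]_\omega)}{e^{\phi^\omega_n(x)-nP_G(\phi)}}\le B_{\theta^n\omega}\,\mu_{\theta^n\omega}(T_{\theta^{n-1}\omega}[w_{n-1}]_{\theta^{n-1}\omega}).$$ If moreover $(X,T)$ has the big image property, then $D_\omega:=\inf\{\mu_\omega(T_{\theta^{-1}\omega}[b]_{\theta^{-1}\omega}): b\in\mathcal W^1_{\theta^{-1}\omega}\}>0$ for a.e. $\omega\in\Omega_{bi}$, and hence for a.e. $\omega$, all $n$ with $\theta^n\omega\in\Omega_{bi}$, all $w\in\mathcal W^n_\omega$ and $x\in[w]_\omega$, $$B_{\theta^n\omega}^{-1}D_{\theta^n\omega}\le\Lambda_n(\omega)\frac{\mu_\omega([w]_\omega)}{e^{\phi^\omega_n(x)-nP_G(\phi)}}\le B_{\theta^n\omega}.$$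
   Context: Let $(\Omega,\mathcal F,P)$ be a probability space and $\theta:\Omega\to\Omega$ an invertible, bimeasurable, $P$-preserving, ergodic map. Let $\ell:\Omega\to\mathbb N\cup\{\infty\}$ be measurable with $\ell_\omega>1$, and for a.e. $\omega$ let $A_\omega=(\alpha_{ij}(\omega))_{0\le i<\ell_\omega,\,0\le j<\ell_{\theta\omega}}$ be a $\{0,1\}$-matrix depending measurably on $\omega$ such that every row contains an entry $1$. Put $X_\omega=\{x=(x_0,x_1,\dots): x_i<\ell_{\theta^i\omega},\ \alpha_{x_ix_{i+1}}(\theta^i\omega)=1\ \forall i\ge0\}$, $T_\omega:X_\omega\to X_{\theta\omega}$ the left shift, $X=\{(\omega,x):x\in X_\omega\}$, $T^n_\omega=T_{\theta^{n-1}\omega}\circ\cdots\circ T_\omega$. A word $w=(w_0,\dots,w_{n-1})$ is $\omega$-admissible if $w_i<\ell_{\theta^i\omega}$ for all $i<n$ and $\alpha_{w_iw_{i+1}}(\theta^i\omega)=1$ for $i<n-1$; $\mathcal W^n_\omega$ is the set of such words; $[w]_\omega=\{x\in X_\omega: x_i=w_i,\ i<n\}$; $\Omega_w=\{\omega: w\in\mathcal W^n_\omega\}$; $\mathcal W^n$ the words with $P(\Omega_w)>0$. Topologically mixing: for all $a,b\in\mathcal W^1$ there is an $\mathbb N$-valued random variable $N_{ab}$ with $[a]_\omega\cap(T^n_\omega)^{-1}[b]_{\theta^n\omega}\ne\emptyset$ whenever $\omega\in\Omega_a$, $n\ge N_{ab}(\omega)$, $\theta^n\omega\in\Omega_b$.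 Big image property: there exist measurable $\Omega_{bi}$ with $P(\Omega_{bi})>0$ and finite sets $\mathcal I^\omega_{bi}\subset\mathcal W^1_\omega$ ($\omega\in\Omega_{bi}$) such that for every $c\in\mathcal W^1_{\theta^{-1}\omega}$ there is $b\in\mathcal I^\omega_{bi}$ with $\alpha_{cb}(\theta^{-1}\omega)=1$. A potential is a measurable $\phi:X\to\mathbb R$; $\phi^\omega_n(x)=\sum_{k=0}^{n-1}\phi^{\theta^k\omega}(T^k_\omega x)$; $V^\omega_n(\phi)=\sup\{|\phi^\omega(x)-\phi^\omega(y)|: x_i=y_i\ (i<n)\}$. $\phi$ is $k$-Hölder if there are $r\in(0,1)$ and a random variable $\kappa\ge1$ with $\int\log\kappa\,dP<\infty$ and $V^\omega_j(\phi)\le\kappa(\omega)r^j$ for all $j\ge k$; $B_\omega:=\exp\sum_{j\ge1}\kappa(\theta^{-j}\omega)r^j$. (H1)/(H2): $\phi$ is 1-Hölder/2-Hölder and $\int\log B\,dP<\infty$. Ruelle operator $L^\omega_\phi f(x)=\sum_{y\in X_\omega,T_\omega y=x}e^{\phi^\omega(y)}f(y)$; (S1): $\int\log\sup L^\omega_\phi1\,dP<\infty$; (S2): $\int\log\inf L^\omega_\phi1\,dP>-\infty$. Setting of the conformal-measure theorem: $(X,T)$ topologically mixing, $\phi$ satisfies (H2),(S1),(S2), the relative Gurevič pressure $P_G(\phi)$ is finite, and $(X,T,\phi)$ is of divergence type, i.e. for a fixed $a\in\mathcal W^1$, a measurable family $\xi_\omega\in X_\omega$ with $\xi_\omega\in[a]_\omega$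 on $\Omega_a$ and some $\widetilde\Omega\subset\Omega_a$ of positive measure, $P_\omega(s)=\sum_{n:\theta^n\omega\in\widetilde\Omega}s^nL^{\omega,n}_\phi1(\xi_{\theta^n\omega})$ is finite for $s<e^{-P_G(\phi)}$ and infinite at $s=e^{-P_G(\phi)}$. Then there are $s_n\nearrow e^{-P_G(\phi)}$, $\lambda(\omega)=\lim_nP_\omega(s_n)/P_{\theta\omega}(s_n)\in(0,\infty)$ a.s., and Borel probability measures $\mu_\omega$ on $X_\omega$, positive on cylinders, with $\mu_{\theta\omega}(T_\omega E)=\lambda(\omega)\int_Ee^{P_G(\phi)-\phi^\omega}d\mu_\omega$ for all Borel $E\subset[c]_\omega$, $c\in\mathcal W^1_\omega$. $\lambda$ and $\mu_\omega$ denote these objects; $\Lambda_n(\omega)=\lambda(\omega)\lambda(\theta\omega)\cdots\lambda(\theta^{n-1}\omega)$. *)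

(* Defs.v *)
From HB Require Import structures.
From mathcomp Require Import all_boot all_order all_algebra.
From mathcomp Require Import all_classical all_reals all_analysis.
Set Implicit Arguments.
Unset Strict Implicit.
Unset Printing Implicit Defensive.
Import Order.TTheory GRing.Theory Num.Theory.
Import numFieldNormedType.Exports.
Local Open Scope classical_set_scope.
Local Open Scope ring_scope.

(* Borel sigma-algebra of the product topology on N^N (N discrete) =
   sigma-algebra generated by the cylinder sets. *)
Definition seq_cylinders : set (set (nat -> nat)) :=
  [set A | exists (n : nat) (w : nat -> nat),
      A = [set x | forall i, (i < n)%N -> x i = w i]].
Definition Seq := g_sigma_algebraType seq_cylinders.

(* i < l, where l : option nat encodes N \cup {oo} (None = oo) *)
Definition lt_ell (l : option nat) (i : nat) : Prop :=
  if l is Some k then (i < k)%N else True.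

Definition shiftn (n : nat) (x : Seq) : Seq := fun i => x (n + i)%N.

Section RandomShift.
Context (R : realType) (d : measure_display) (Omega : measurableType d)
  (P : probability Omega R) (theta thetai : Omega -> Omega)
  (ell : Omega -> option nat) (alpha : Omega -> nat -> nat -> bool).

Definition Xw (om : Omega) : set Seq :=
  [set x | forall i, lt_ell (ell (iter i theta om)) (x i) /\
                     alpha (iter i theta om) (x i) (x i.+1)].

Definition Xset : set (Omega * Seq) := [set p | Xw p.1 p.2].

Definition admissible (om : Omega) (w : seq nat) : Prop :=
  (forall i, (i < size w)%N -> lt_ell (ell (iter i theta om)) (nth 0%N w i)) /\
  (forall i, (i.+1 < size w)%N ->
     alpha (iter i theta om) (nth 0%N w i) (nth 0%N w i.+1)).

Definition Wn (n : nat) (om : Omega) : set (seq nat) :=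
  [set w | size w = n /\ admissible om w].

Definition cyl (om : Omega) (w : seq nat) : set Seq :=
  [set x | Xw om x /\ forall i, (i < size w)%N -> x i = nth 0%N w i].

Definition Omega_w (w : seq nat) : set Omega := [set om | admissible om w].

Definition Wglob (n : nat) : set (seq nat) :=
  [set w | size w = n /\ (0 < P (Omega_w w))%E].

Definition base_system : Prop :=
  cancel theta thetai /\ cancel thetai theta /\
  measurable_fun setT theta /\ measurable_fun setT thetai /\
  (forall A, measurable A -> P (theta @^-1` A) = P A) /\
  (forall A, measurable A -> theta @^-1` A = A -> P A = 0%E \/ P A = 1%E) /\
  (forall k, measurable [set om | ell om = k]) /\
  (forall om, lt_ell (ell om) 1%N) /\
  (forall i j, measurable [set om | alpha om i j]) /\
  {ae P, forall om, forall i, lt_ell (ell om) i ->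
        exists j, lt_ell (ell (theta om)) j /\ alpha om i j}.

Definition top_mixing : Prop :=
  forall a b, Wglob 1 [:: a] -> Wglob 1 [:: b] ->
  exists N : Omega -> nat,
    (forall k, measurable [set om | N om = k]) /\
    forall om n, Omega_w [:: a] om -> (N om <= n)%N ->
      Omega_w [:: b] (iter n theta om) ->
      exists x, cyl om [:: a] x /\ cyl (iter n theta om) [:: b] (shiftn n x).

Definition big_image_property (Obi : set Omega) (I : Omega -> seq nat) : Prop :=
  measurable Obi /\ (0 < P Obi)%E /\
  forall om, Obi om ->
    (forall b, b \in I om -> Wn 1 om [:: b]) /\
    (forall c, Wn 1 (thetai om) [:: c] ->
       exists2 b, b \in I om & alpha (thetai om) c b).

Section Potential.
Variable phi : Omega -> Seq -> R.

Definition measurable_potential : Prop :=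
  measurable_fun Xset (fun p => phi p.1 p.2).

Definition birk (om : Omega) (n : nat) (x : Seq) : R :=
  \sum_(k < n) phi (iter k theta om) (shiftn k x).

Definition Var (om : Omega) (n : nat) : \bar R :=
  ereal_sup [set e | exists x y, Xw om x /\ Xw om y /\
      (forall i, (i < n)%N -> x i = y i) /\ e = (`|phi om x - phi om y|)%:E].

Definition holder (k : nat) (r : R) (kappa : Omega -> R) : Prop :=
  0 < r < 1 /\ measurable_fun setT kappa /\ (forall om, 1 <= kappa om) /\
  (\int[P]_om (ln (kappa om))%:E < +oo)%E /\
  forall om j, (k <= j)%N -> (Var om j <= (kappa om * r ^+ j)%:E)%E.

Definition logB (kappa : Omega -> R) (r : R) (om : Omega) : \bar R :=
  (\sum_(1 <= j <oo) (kappa (iter j thetai om) * r ^+ j)%:E)%E.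

(* B_omega (real-valued; finite a.e.) *)
Definition Bf (kappa : Omega -> R) (r : R) (om : Omega) : R :=
  expR (fine (logB kappa r om)).

(* (H1) / (H2) : (Hcond 1) / (Hcond 2) *)
Definition Hcond (k : nat) : Prop :=
  exists r kappa, holder k r kappa /\ (\int[P]_om logB kappa r om < +oo)%E.

(* L^{omega,n}_phi 1 (x) = sum_{y in X_omega, T^n_omega y = x} e^{phi^omega_n(y)} *)
Definition Lsum (om : Omega) (n : nat) (x : Seq) : \bar R :=
  (\esum_(y in [set y | Xw om y /\ shiftn n y = x]) (expR (birk om n y))%:E)%E.

Definition S1 : Prop :=
  (\int[P]_om maxe (lne (ereal_sup [set Lsum om 1 x | x in Xw (theta om)])) 0
     < +oo)%E.
Definition S2 : Prop :=
  (\int[P]_om maxe (- lne (ereal_inf [set Lsum om 1 x | x in Xw (theta om)])) 0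
     < +oo)%E.

Definition Pser (xi : Omega -> Seq) (Ot : set Omega) (om : Omega) (s : R)
  : \bar R :=
  (\sum_(0 <= n <oo)
     (if `[< Ot (iter n theta om) >] then
        (s ^+ n)%:E * Lsum om n (xi (iter n theta om)) else 0))%E.

(* divergence type, with the data a, xi, Ot and the value PG of P_G(phi) *)
Definition divergence_type (PG : R) (a : nat) (xi : Omega -> Seq)
  (Ot : set Omega) : Prop :=
  Wglob 1 [:: a] /\ measurable_fun setT xi /\
  {ae P, forall om, Xw om (xi om)} /\
  (forall om, Omega_w [:: a] om -> cyl om [:: a] (xi om)) /\
  measurable Ot /\ Ot `<=` Omega_w [:: a] /\ (0 < P Ot)%E /\
  {ae P, forall om,
     (forall s, 0 <= s < expR (- PG) -> (Pser xi Ot om s < +oo)%E) /\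
     Pser xi Ot om (expR (- PG)) = +oo%E}.

(* the objects provided by the conformal-measure theorem *)
Definition conformal_data (PG : R) (xi : Omega -> Seq) (Ot : set Omega)
  (s : nat -> R) (lam : Omega -> R) (mu : Omega -> probability Seq R) : Prop :=
  (forall n, 0 <= s n < expR (- PG)) /\ {homo s : m n / (m <= n)%N >-> m <= n} /\
  (s @ \oo --> expR (- PG)) /\
  {ae P, forall om, 0 < lam om /\
     ((fun n => fine (Pser xi Ot om (s n)) / fine (Pser xi Ot (theta om) (s n)))
        @ \oo --> lam om)} /\
  {ae P, forall om,
     mu om (Xw om) = 1%E /\
     (forall w, (0 < size w)%N -> admissible om w -> (0 < mu om (cyl om w))%E) /\
     (forall c (E : set Seq), Wn 1 om [:: c] -> measurable E ->
        E `<=` cyl om [:: c] ->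
        mu (theta om) (shiftn 1 @` E) =
          ((lam om)%:E * \int[mu om]_(x in E) (expR (PG - phi om x))%:E)%E)}.

Definition Lam (lam : Omega -> R) (n : nat) (om : Omega) : R :=
  \prod_(k < n) lam (iter k theta om).

Definition middle (PG : R) (lam : Omega -> R) (mu : Omega -> probability Seq R)
  (om : Omega) (n : nat) (w : seq nat) (x : Seq) : R :=
  Lam lam n om * fine (mu om (cyl om w)) / expR (birk om n x - n%:R * PG).

End Potential.

Definition Timg (mu : Omega -> probability Seq R) (om : Omega) (n : nat)
  (w : seq nat) : R :=
  fine (mu (iter n theta om)
          (shiftn 1 @` cyl (iter n.-1 theta om) [:: nth 0%N w n.-1])).

Definition Dinf (mu : Omega -> probability Seq R) (om : Omega) : \bar R :=
  ereal_inf [set mu om (shiftn 1 @` cyl (thetai om) [:: b]) |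
             b in [set b | Wn 1 (thetai om) [:: b]]].

End RandomShift.

(* Main.v *)
Require Import Defs.
From HB Require Import structures.
From mathcomp Require Import all_boot all_order all_algebra.
From mathcomp Require Import all_classical all_reals all_analysis.
From mathcomp Require Import ring lra.
From mathcomp Require Import measurable_realfun.
Import Order.TTheory GRing.Theory Num.Theory.
Import numFieldNormedType.Exports.
Local Open Scope classical_set_scope.
Local Open Scope ring_scope.

Lemma mcyl (n : nat) (w : nat -> nat) :
  measurable ([set x : Seq | forall i, (i < n)%N -> x i = w i]).
Proof. by apply: sub_sigma_algebra; exists n, w. Qed.

Lemma mcoord (i a : nat) : measurable [set x : Seq | x i = a].
Proof.
pose F (k : nat) : set Seq :=
  if (unpickle k : option (seq nat)) is Some u then
    (if (size u == i.+1) && (nth 0%N u i == a) then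
       [set x : Seq | forall j, (j < i.+1)%N -> x j = nth 0%N u j] else set0)
  else set0.
have -> : [set x : Seq | x i = a] = \bigcup_k F k.
  apply/seteqP; split => x /=.
    move=> xa; exists (pickle (mkseq x i.+1)) => //.
    rewrite /F pickleK size_mkseq nth_mkseq // xa !eqxx /= => j ji.
    by rewrite nth_mkseq.
  move=> [k _]; rewrite /F; case: (unpickle k) => // u.
  case: ifP => // /andP[/eqP su /eqP ua] H.
  by rewrite H // ua.
apply: bigcupT_measurable => k; rewrite /F; case: (unpickle k) => // u.
case: ifP => // _; exact: (mcyl i.+1 (fun j => nth 0%N u j)).
Qed.

Lemma mconst (Q : Prop) : measurable [set _ : Seq | Q].
Proof.
case: (pselect Q) => q.
  by rewrite (_ : [set _ | Q] = setT) //; apply/seteqP; split.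
by rewrite (_ : [set _ | Q] = set0) //; apply/seteqP; split.
Qed.

Lemma mcoord1 (i : nat) (Q : nat -> Prop) : measurable [set x : Seq | Q (x i)].
Proof.
have -> : [set x : Seq | Q (x i)] =
  \bigcup_a ([set x : Seq | x i = a] `&` [set _ | Q a]).
  apply/seteqP; split => x /=; first by move=> q; exists (x i).
  by move=> [a _ [-> ]].
apply: bigcupT_measurable => a; apply: measurableI; [exact: mcoord|exact: mconst].
Qed.

Lemma mcoord2 (i j : nat) (Q : nat -> nat -> Prop) :
  measurable [set x : Seq | Q (x i) (x j)].
Proof.
have -> : [set x : Seq | Q (x i) (x j)] =
  \bigcup_a \bigcup_b ([set x : Seq | x i = a] `&` [set x : Seq | x j = b]
     `&` [set _ | Q a b]).
  apply/seteqP; split => x /=; first by move=> q; exists (x i) => //; exists (x j).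
  by move=> [a _ [b _ [[-> ->]]]].
apply: bigcupT_measurable => a; apply: bigcupT_measurable => b.
apply: measurableI; last exact: mconst.
apply: measurableI; exact: mcoord.
Qed.

Definition scons (c : nat) (y : Seq) : Seq := fun i => if i is j.+1 then y j else c.

Lemma shift_scons c y : shiftn 1 (scons c y) = y.
Proof. by apply/funext => i; rewrite /shiftn add1n. Qed.

Lemma shiftnS (n : nat) (x : Seq) : shiftn n.+1 x = shiftn n (shiftn 1 x).
Proof. by apply/funext => i; rewrite /shiftn add1n addSn. Qed.

Lemma shiftn0 (x : Seq) : shiftn 0 x = x.
Proof. by apply/funext => i; rewrite /shiftn add0n. Qed.

Section Shift.
Context {d : measure_display} {Omega : measurableType d}
  (theta : Omega -> Omega) (ell : Omega -> option nat)
  (alpha : Omega -> nat -> nat -> bool).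

Local Notation Xw := (Xw theta ell alpha).
Local Notation cyl := (cyl theta ell alpha).

Lemma mXw om : measurable (Xw om).
Proof.
have -> : Xw om = \bigcap_i ([set x : Seq | lt_ell (ell (iter i theta om)) (x i)]
   `&` [set x : Seq | alpha (iter i theta om) (x i) (x i.+1)]).
  apply/seteqP; split => x /= H i; [by move=> _; exact: H | exact: H].
apply: bigcapT_measurable => i; apply: measurableI.
  exact: (mcoord1 i (fun a => lt_ell (ell (iter i theta om)) a)).
exact: (mcoord2 i i.+1 (fun a b => alpha (iter i theta om) a b)).
Qed.

Lemma mcylw om w : measurable (cyl om w).
Proof.
have -> : cyl om w = Xw om `&` [set x : Seq | forall i, (i < size w)%N ->
   x i = (fun j => nth 0%N w j) i] by [].
apply: measurableI; [exact: mXw | exact: mcyl].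
Qed.

Lemma Xw_cons om x : Xw om x <->
  [/\ lt_ell (ell om) (x 0%N), alpha om (x 0%N) (x 1%N) & Xw (theta om) (shiftn 1 x)].
Proof.
split.
  move=> H; have [h1 h2] := H 0%N; split => // i.
  have [h3 h4] := H i.+1; rewrite /shiftn !add1n -iterSr; split => //.
move=> [h1 h2 H] [|i]; first by split.
have [h3 h4] := H i.
by rewrite /shiftn !add1n in h3 h4; rewrite iterSr.
Qed.

Lemma shift_cyl om c w : w != [::] -> admissible theta ell alpha om (c :: w) ->
  shiftn 1 @` cyl om (c :: w) = cyl (theta om) w.
Proof.
move=> w0 [ad1 ad2]; apply/seteqP; split => y /=.
  move=> [x [/Xw_cons [_ _ Xx] cx] <-]; split => // i iw.
  by rewrite /shiftn add1n (cx i.+1).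
move=> [Xy cy]; exists (scons c y); last exact: shift_scons.
split; last by move=> [|i] //= iw; rewrite cy.
apply/Xw_cons; rewrite /= shift_scons; split => //.
- exact: (ad1 0%N).
- have := ad2 0%N; case: w w0 cy {ad1 ad2} => // b w _ cy /=.
  by rewrite (cy 0%N) //= => ->.
Qed.

Lemma shift_cyl1 om c : shiftn 1 @` cyl om [:: c] =
  Xw (theta om) `&` [set y : Seq | alpha om c (y 0%N)] `&` [set _ | lt_ell (ell om) c].
Proof.
apply/seteqP; split => y /=.
  move=> [x [/Xw_cons [h1 h2 Xx] cx] <-]; have c0 := cx 0%N erefl.
  by rewrite /= in c0; rewrite /shiftn addn0 -c0; split.
move=> [[Xy al] lc]; exists (scons c y); last exact: shift_scons.
split; last by move=> [|i].
by apply/Xw_cons; rewrite shift_scons.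
Qed.

Lemma mshift_cyl1 om c : measurable (shiftn 1 @` cyl om [:: c]).
Proof.
rewrite shift_cyl1; apply: measurableI; last exact: mconst.
apply: measurableI; first exact: mXw.
exact: (mcoord1 0 (fun a => alpha om c a)).
Qed.

End Shift.
Local Open Scope ereal_scope.
Lemma ge0_le_integral_nm (R : realType) d (T : measurableType d)
  (mu : {measure set T -> \bar R}) (D1 D2 : set T) (f g : T -> \bar R) :
  (forall x, D1 x -> 0 <= f x) -> (forall x, D2 x -> 0 <= g x) ->
  (forall x, D1 x -> D2 x /\ f x <= g x) ->
  \int[mu]_(x in D1) f x <= \int[mu]_(x in D2) g x.
Proof.
move=> f0 g0 fg; rewrite !ge0_integralE //.
apply: ereal_sup_le => _ [h hf <-]; exists h => //= x.
apply: le_trans (hf x) _; rewrite /patch.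
case: ifPn => [/set_mem xD1|_]; last first.
  by case: ifPn => // /set_mem /g0.
by have [xD2 le] := fg x xD1; rewrite ifT //; exact/mem_set.
Qed.
Local Close Scope ereal_scope.

Lemma int_bounds (R : realType) d (T : measurableType d)
  (mu : probability T R) (E : set T) (f : T -> R) (lo hi : R) :
  measurable E -> 0 <= lo -> (forall y, E y -> lo <= f y <= hi) ->
  (\int[mu]_(x in E) (f x)%:E)%E \is a fin_num /\
  lo * fine (mu E) <= fine (\int[mu]_(x in E) (f x)%:E)%E <= hi * fine (mu E).
Proof.
move=> mE lo0 H.
have m0 : (0 <= mu E)%E by [].
have m1 : (mu E <= 1)%E by exact: probability_le1.
have mfin : mu E \is a fin_num by rewrite ge0_fin_numE // (le_lt_trans m1) // ltry.
have L : (lo%:E * mu E <= \int[mu]_(x in E) (f x)%:E)%E.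
  rewrite -integral_cst //; apply: ge0_le_integral_nm => x Ex.
  - by rewrite lee_fin.
  - by have /andP[h1 _] := H x Ex; rewrite lee_fin (le_trans lo0).
  - by have /andP[h1 _] := H x Ex; split => //; rewrite lee_fin.
have U : (\int[mu]_(x in E) (f x)%:E <= hi%:E * mu E)%E.
  rewrite -integral_cst //; apply: ge0_le_integral_nm => x Ex.
  - by have /andP[h1 _] := H x Ex; rewrite lee_fin (le_trans lo0).
  - by have /andP[h1 h2] := H x Ex; rewrite lee_fin (le_trans lo0) // (le_trans h1).
  - by have /andP[_ h2] := H x Ex; split => //; rewrite lee_fin.
have ifin : (\int[mu]_(x in E) (f x)%:E)%E \is a fin_num.
  rewrite fin_numElt; apply/andP; split.
    by apply: lt_le_trans L; rewrite -(fineK mfin) -EFinM ltNyr.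
  by apply: le_lt_trans U _; rewrite -(fineK mfin) -EFinM ltry.
split => //; apply/andP; split.
  by rewrite -lee_fin EFinM !fineK.
by rewrite -lee_fin EFinM !fineK.
Qed.

Section Part1.
Context {R : realType} {d : measure_display} {Omega : measurableType d}
  (theta thetai : Omega -> Omega) (ell : Omega -> option nat)
  (alpha : Omega -> nat -> nat -> bool) (phi : Omega -> Seq -> R)
  (PG : R) (lam : Omega -> R) (mu : Omega -> probability Seq R)
  (r : R) (kappa : Omega -> R).

Local Notation Xw := (Xw theta ell alpha).
Local Notation cyl := (cyl theta ell alpha).
Local Notation Wn := (Wn theta ell alpha).

Definition conf_at (om : Omega) : Prop :=
  forall c (E : set Seq), Wn 1 om [:: c] -> measurable E ->
     E `<=` cyl om [:: c] ->
     mu (theta om) (shiftn 1 @` E) =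
       ((lam om)%:E * \int[mu om]_(x in E) (expR (PG - phi om x))%:E)%E.

Lemma conf_step om c E x0 dl : 0 <= lam om -> conf_at om ->
  Wn 1 om [:: c] -> measurable E -> E `<=` cyl om [:: c] ->
  (forall y, E y -> `|phi om y - phi om x0| <= dl) ->
  lam om * fine (mu om E) * expR (PG - phi om x0) * expR (- dl)
    <= fine (mu (theta om) (shiftn 1 @` E))
    <= lam om * fine (mu om E) * expR (PG - phi om x0) * expR dl.
Proof.
move=> l0 conf Wc mE sE Hd.
have B : forall y, E y -> expR (PG - phi om x0 - dl) <= expR (PG - phi om y)
   <= expR (PG - phi om x0 + dl).
  move=> y Ey; move: (Hd y Ey); rewrite ler_norml => /andP[H1 H2].
  by rewrite !ler_expR; apply/andP; split; lra.
have [ifin /andP[h1 h2]] := @int_bounds R _ _ (mu om) E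
   (fun x => expR (PG - phi om x)) (expR (PG - phi om x0 - dl))
   (expR (PG - phi om x0 + dl)) mE (ltW (expR_gt0 _)) B.
rewrite (conf c E) // -(fineK ifin) -EFinM /=.
set m := fine (mu om E).
rewrite -!mulrA -!expRD; apply/andP; split.
  by rewrite ler_wpM2l // [m * _]mulrC.
by rewrite ler_wpM2l // [m * _]mulrC.
Qed.

Lemma var_bound om w x y :
  (forall om j, (1 <= j)%N -> (Var theta ell alpha phi om j <= (kappa om * r ^+ j)%:E)%E) ->
  (1 <= size w)%N -> cyl om w x -> cyl om w y ->
  `|phi om y - phi om x| <= kappa om * r ^+ size w.
Proof.
move=> Hv sw [Xx cx] [Xy cy]; rewrite -lee_fin; apply: le_trans (Hv om _ sw).
apply: ereal_sup_ubound; exists y, x; do 3 split => //.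
by move=> i iw; rewrite cx // cy.
Qed.

Definition Sb (z : Omega) (n : nat) : R :=
  \sum_(1 <= j < n.+1) kappa (iter j thetai z) * r ^+ j.

Lemma iter_cancel : cancel theta thetai ->
  forall k z, iter k thetai (iter k theta z) = z.
Proof.
move=> c; elim=> // k IH z; rewrite iterSr iterS c; exact: IH.
Qed.

Lemma SbS : cancel theta thetai -> forall n om,
  Sb (iter n.+2 theta om) n.+2 =
  Sb (iter n.+1 theta (theta om)) n.+1 + kappa om * r ^+ n.+2.
Proof.
move=> c n om; rewrite /Sb big_nat_recr // iter_cancel //.
by rewrite -[in RHS]iterSr.
Qed.

Lemma Sb1 : cancel theta thetai -> forall om, Sb (theta om) 1 = kappa om * r.
Proof. by move=> c om; rewrite /Sb big_nat1 /= c expr1. Qed.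

Lemma LamS n om : Lam theta lam n.+1 om = lam om * Lam theta lam n (theta om).
Proof.
rewrite /Lam big_ord_recl; congr (_ * _); apply: eq_bigr => i _.
by rewrite /= add0n -iterS iterSr.
Qed.

Lemma birkS n om x : birk theta phi om n.+1 x =
  phi om x + birk theta phi (theta om) n (shiftn 1 x).
Proof.
rewrite /birk big_ord_recl /= shiftn0; congr (_ + _); apply: eq_bigr => i _.
by rewrite /=; rewrite add0n -iterS iterSr shiftnS.
Qed.

Lemma Wn_shift n om c w : Wn n.+1 om (c :: w) -> Wn n (theta om) w.
Proof.
move=> [/= [sw] [ad1 ad2]]; split => //; split => i iw.
  by have := ad1 i.+1 iw; rewrite iterSr.
by have := ad2 i.+1 iw; rewrite iterSr.
Qed.

Lemma Wn_head n om c w : Wn n.+1 om (c :: w) -> Wn 1 om [:: c].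
Proof.
move=> [_ [ad1 ad2]]; split => //; split => -[|i] //= _.
exact: (ad1 0%N).
Qed.

Lemma cyl_sub1 om c w x : cyl om (c :: w) x -> cyl om [:: c] x.
Proof. by move=> [Xx cx]; split => // -[|i] // _; exact: (cx 0%N). Qed.

Definition Kf (n : nat) (z : Omega) (y : Seq) : R :=
  Lam theta lam n z * expR (- (birk theta phi z n y - n%:R * PG)).

Lemma middle_eq2 n z w y : middle theta ell alpha phi PG lam mu z n w y =
  fine (mu z (cyl z w)) * Kf n z y.
Proof. rewrite /middle /Kf expRN; ring. Qed.

Lemma middle_eq n om w x : middle theta ell alpha phi PG lam mu om n.+1 w x =
  lam om * fine (mu om (cyl om w)) * expR (PG - phi om x) * Kf n (theta om) (shiftn 1 x).
Proof.
rewrite middle_eq2 /Kf LamS birkS.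
have -> : - (phi om x + birk theta phi (theta om) n (shiftn 1 x) - n.+1%:R * PG) =
  (PG - phi om x) + (- (birk theta phi (theta om) n (shiftn 1 x) - n%:R * PG)).
  by rewrite -natr1; ring.
rewrite expRD; ring.
Qed.

Lemma Kf0 z y : Kf 0 z y = 1.
Proof. by rewrite /Kf /Lam /birk !big_ord0 mul0r subr0 oppr0 expR0 mulr1. Qed.

Lemma Lam_ge0 n z : (forall k, 0 <= lam (iter k theta z)) -> 0 <= Lam theta lam n z.
Proof. by move=> H; apply: prodr_ge0 => i _. Qed.

Lemma swap1 (a b e : R) : a * expR (- e) <= b -> a <= b * expR e.
Proof.
move=> H; have -> : a = a * expR (- e) * expR e by rewrite -mulrA -expRD addNr expR0 mulr1.
by rewrite ler_wpM2r // ltW // expR_gt0.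
Qed.

Lemma swap2 (a b e : R) : b <= a * expR e -> b * expR (- e) <= a.
Proof.
move=> H; have -> : a = a * expR e * expR (- e) by rewrite -mulrA -expRD addrN expR0 mulr1.
by rewrite ler_wpM2r // ltW // expR_gt0.
Qed.

Lemma part1_core : cancel theta thetai ->
  (forall om j, (1 <= j)%N -> (Var theta ell alpha phi om j <= (kappa om * r ^+ j)%:E)%E) ->
  forall n om w x,
  (forall k, 0 <= lam (iter k theta om) /\ conf_at (iter k theta om)) ->
  Wn n.+1 om w -> cyl om w x ->
  Timg theta ell alpha mu om n.+1 w * expR (- Sb (iter n.+1 theta om) n.+1)
    <= middle theta ell alpha phi PG lam mu om n.+1 w x
    <= Timg theta ell alpha mu om n.+1 w * expR (Sb (iter n.+1 theta om) n.+1).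
Proof.
move=> ctt Hv; elim=> [|n IH] om w x G Ww cx.
- have [sw _] := Ww; case: w sw Ww cx => [|c [|]] // _ Ww cx.
  have [l0 conf] := G 0%N.
  have := @conf_step om c (cyl om [:: c]) x (kappa om * r) l0 conf Ww (mcylw _ _ _ _ _)
    (@subset_refl _ _) (fun y cy => @var_bound om [:: c] x y Hv erefl cx cy).
  move=> /andP[h1 h2].
  rewrite middle_eq Kf0 mulr1 /Timg /= Sb1 //.
  by apply/andP; split; [apply: swap2 | apply: swap1].
- have [sw _] := Ww; case: w sw Ww cx => [|c w'] // [sw'] Ww cx.
  have w0 : w' != [::] by case: w' sw' {Ww cx}.
  have Ww' : Wn n.+1 (theta om) w' by apply: Wn_shift Ww.
  have cx' : cyl (theta om) w' (shiftn 1 x).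
    by rewrite -(@shift_cyl _ _ theta ell alpha om c w' w0 (proj2 Ww)); exists x.
  have G' : forall k, 0 <= lam (iter k theta (theta om)) /\ conf_at (iter k theta (theta om)).
    by move=> k; rewrite -iterSr.
  have /andP[i1 i2] := IH (theta om) w' (shiftn 1 x) G' Ww' cx'.
  have [l0 conf] := G 0%N.
  have Vb : forall y, cyl om (c :: w') y -> `|phi om y - phi om x| <= kappa om * r ^+ n.+2.
    by move=> y cy; have := @var_bound om (c :: w') x y Hv erefl cx cy; rewrite /= sw'.
  have := @conf_step om c (cyl om (c :: w')) x (kappa om * r ^+ n.+2) l0 conf
    (@Wn_head n.+1 om c w' Ww) (mcylw _ _ _ _ _) (fun y => @cyl_sub1 om c w' y) Vb.
  rewrite (@shift_cyl _ _ theta ell alpha om c w' w0 (proj2 Ww)) => /andP[h1 h2].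
  rewrite middle_eq2 in i1 i2.
  have -> : Timg theta ell alpha mu om n.+2 (c :: w') = Timg theta ell alpha mu (theta om) n.+1 w'.
    by rewrite /Timg [iter n.+2 _ _]iterSr [iter n.+1 theta om]iterSr.
  rewrite middle_eq SbS //.
  rewrite (expRD (Sb _ _)) opprD (expRD (- Sb _ _)).
  move: i1 i2 h1 h2.
  set T := Timg _ _ _ _ _ _ _.
  set A := fine (mu (theta om) (cyl (theta om) w')).
  set K := Kf n.+1 (theta om) (shiftn 1 x).
  set Pp := lam om * _ * _.
  set S := Sb _ _.
  set dl := kappa om * _ => i1 i2 h1 h2.
  have K0 : 0 <= K by rewrite /K /Kf mulr_ge0 ?Lam_ge0 // ?ltW ?expR_gt0 // => k; case: (G' k).
  have P1 : A * expR (- dl) <= Pp by apply: swap2.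
  have P2 : Pp <= A * expR dl by apply: swap1.
  have e1 := expR_gt0 dl; have e2 := expR_gt0 (- dl).
  apply/andP; split; nra.
Qed.

End Part1.
Section AE.
Context {R : realType} {d : measure_display} {Omega : measurableType d}
  (P : probability Omega R) (theta thetai : Omega -> Omega).

Lemma ae_iter (Q : Omega -> Prop) :
  measurable_fun setT theta ->
  (forall A, measurable A -> P (theta @^-1` A) = P A) ->
  {ae P, forall om, Q om} -> {ae P, forall om, forall k, Q (iter k theta om)}.
Proof.
move=> mt pr [N [mN N0 sN]].
have mI : forall k A, measurable A -> measurable ((iter k theta) @^-1` A) /\
   P ((iter k theta) @^-1` A) = P A.
  elim=> [|k IH] A mA; first by [].
  have mA' : measurable (theta @^-1` A) by rewrite -[_ @^-1` _]setTI; exact: mt.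
  have [h1 h2] := IH _ mA'.
  have -> : (iter k.+1 theta) @^-1` A = (iter k theta) @^-1` (theta @^-1` A).
    by apply/seteqP; split.
  by rewrite h2 pr.
apply: (@negligibleS _ _ _ _ (\bigcup_k ((iter k theta) @^-1` N))).
  move=> om /= /existsNP [k nQ]; exists k => //; exact: sN.
apply: negligible_bigcup => k; have [h1 h2] := mI k N mN.
by exists ((iter k theta) @^-1` N); split => //; exact: (etrans h2 N0).
Qed.


Lemma ae_thetai (Q : Omega -> Prop) :
  cancel theta thetai -> measurable_fun setT thetai ->
  (forall A, measurable A -> P (theta @^-1` A) = P A) ->
  {ae P, forall om, Q om} -> {ae P, forall om, Q (thetai om)}.
Proof.
move=> c mt pr [N [mN N0 sN]].
have mN' : measurable (thetai @^-1` N) by rewrite -[_ @^-1` _]setTI; exact: mt.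
exists (thetai @^-1` N); split => //.
  have <- := pr _ mN'.
  have -> : theta @^-1` (thetai @^-1` N) = N by apply/seteqP; split => x /=; rewrite c.
  exact: N0.
by move=> om /= nQ; apply: sN.
Qed.

Lemma ae_and (Q1 Q2 : Omega -> Prop) :
  {ae P, forall om, Q1 om} -> {ae P, forall om, Q2 om} ->
  {ae P, forall om, Q1 om /\ Q2 om}.
Proof.
move=> n1 n2.
apply: (negligibleS _ (negligibleU n1 n2)).
by move=> om /= /not_andP [h|h]; [left | right].
Qed.

Lemma ae_mono (Q1 Q2 : Omega -> Prop) :
  (forall om, Q1 om -> Q2 om) -> {ae P, forall om, Q1 om} -> {ae P, forall om, Q2 om}.
Proof.
move=> H [N [m N0 s]]; exists N; split => // om /= nQ; apply: s => /= /H.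
exact: nQ.
Qed.


Lemma logB_ae (kappa : Omega -> R) (r : R) :
  measurable_fun setT thetai -> measurable_fun setT kappa ->
  (forall om, 0 <= kappa om) -> 0 <= r ->
  (\int[P]_om logB thetai kappa r om < +oo)%E ->
  {ae P, forall om, logB thetai kappa r om \is a fin_num}.
Proof.
move=> mti mk k0 r0 fin.
have mit : forall j, measurable_fun setT (iter j thetai).
  elim=> [|j IH]; first exact: measurable_id.
  exact: measurableT_comp mti IH.
have h0 : forall j om, (0 <= (kappa (iter j thetai om) * r ^+ j)%:E)%E.
  by move=> j om; rewrite lee_fin mulr_ge0 // exprn_ge0.
have mL : measurable_fun (setT : set Omega) ((fun om => logB thetai kappa r om) : Omega -> \bar R).
  have -> : logB thetai kappa r = fun om =>
     (\sum_(i <oo | i \in (fun i => (1 <= i)%N : bool)) (kappa (iter i thetai om) * r ^+ i)%:E)%E.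
    apply/funext => om; rewrite /logB eseries_cond.
    by apply: congr_lim; apply/funext => n; apply: eq_bigl => i.
  apply: ge0_emeasurable_sum; first by move=> k om _ _; exact: h0.
  move=> k _; apply/measurable_EFinP; apply: measurable_funM => //.
  exact: measurableT_comp mk (mit k).
have L0 : forall om, (0 <= logB thetai kappa r om)%E.
  by move=> om; apply: nneseries_ge0 => j _ _.
have int : P.-integrable setT (logB thetai kappa r).
  apply/integrableP; split => //.
  under eq_integral do rewrite gee0_abs //.
  exact: fin.
apply: ae_mono (integrable_ae measurableT int).
by move=> om; apply.
Qed.

End AE.

Section Final.
Context {R : realType} {d : measure_display} {Omega : measurableType d}
  (theta thetai : Omega -> Omega) (ell : Omega -> option nat)
  (alpha : Omega -> nat -> nat -> bool) (phi : Omega -> Seq -> R)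
  (PG : R) (lam : Omega -> R) (mu : Omega -> probability Seq R)
  (r : R) (kappa : Omega -> R).

Local Notation Xw := (Xw theta ell alpha).
Local Notation cyl := (cyl theta ell alpha).
Local Notation Wn := (Wn theta ell alpha).
Local Notation conf_at := (conf_at theta ell alpha phi PG lam mu).
Local Notation Sb := (Sb thetai r kappa).

Lemma Sb_le z n : (forall om, 0 <= kappa om) -> 0 <= r ->
  logB thetai kappa r z \is a fin_num -> Sb z n <= fine (logB thetai kappa r z).
Proof.
move=> k0 r0 fin; rewrite -lee_fin fineK // /Sb -sumEFin.
apply: nneseries_lim_ge => j _ _; rewrite lee_fin mulr_ge0 // exprn_ge0 //.
Qed.

Lemma Timg_ge0 om n w : 0 <= Timg theta ell alpha mu om n w.
Proof. exact: fine_ge0. Qed.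

Lemma part1_om om : cancel theta thetai ->
  (forall om j, (1 <= j)%N -> (Var theta ell alpha phi om j <= (kappa om * r ^+ j)%:E)%E) ->
  (forall om, 0 <= kappa om) -> 0 <= r ->
  (forall k, (0 <= lam (iter k theta om) /\ conf_at (iter k theta om)) /\
     logB thetai kappa r (iter k theta om) \is a fin_num) ->
  forall (n : nat) (w : seq nat) (x : Seq),
     (1 <= n)%N -> Wn n om w -> cyl om w x ->
     Timg theta ell alpha mu om n w / Bf thetai kappa r (iter n theta om)
       <= middle theta ell alpha phi PG lam mu om n w x /\
     middle theta ell alpha phi PG lam mu om n w x
       <= Bf thetai kappa r (iter n theta om) * Timg theta ell alpha mu om n w.
Proof.
move=> ctt Hv k0 r0 G [//|n] w x _ Ww cx.
have /andP[h1 h2] := @part1_core R d Omega theta thetai ell alpha phi PG lam mu r kappa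
  ctt Hv n om w x (fun k => (G k).1) Ww cx.
have SL := @Sb_le (iter n.+1 theta om) n.+1 k0 r0 (G n.+1).2.
have T0 := Timg_ge0 om n.+1 w.
move: h1 h2 SL T0; rewrite /Bf.
set T := Timg _ _ _ _ _ _ _; set M := middle _ _ _ _ _ _ _ _ _ _ _.
set S := Sb _ _; set L := fine _ => h1 h2 SL T0.
split.
  rewrite -expRN; apply: le_trans h1; apply: ler_wpM2l => //; rewrite ler_expR; lra.
apply: (le_trans h2); rewrite [expR L * T]mulrC; apply: ler_wpM2l => //; rewrite ler_expR.
by [].
Qed.


Lemma Dinf_le om n w : cancel theta thetai -> Wn n.+1 om w ->
  (0 <= Dinf theta thetai ell alpha mu (iter n.+1 theta om))%E /\
  (Dinf theta thetai ell alpha mu (iter n.+1 theta om) <=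
     mu (iter n.+1 theta om) (shiftn 1 @` cyl (iter n theta om) [:: nth 0%N w n]))%E /\
  (mu (iter n.+1 theta om) (shiftn 1 @` cyl (iter n theta om) [:: nth 0%N w n]) <= 1)%E.
Proof.
move=> ctt [sw [ad1 ad2]]; split; [|split].
- by apply: le_ereal_inf_tmp => _ [b _ <-].
- apply: ereal_inf_lbound; exists (nth 0%N w n) => //.
    by rewrite /= ctt; split => //; split => // -[|i] //= _; apply: ad1; rewrite sw.
  by rewrite /= ctt.
- by apply: probability_le1; exact: mshift_cyl1.
Qed.

Lemma Dinf_pos om (Obi : set Omega) (I : Omega -> seq nat) :
  cancel thetai theta -> Obi om ->
  (forall om, Obi om ->
    (forall b, b \in I om -> Wn 1 om [:: b]) /\
    (forall c, Wn 1 (thetai om) [:: c] ->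
       exists2 b, b \in I om & alpha (thetai om) c b)) ->
  (forall w, (0 < size w)%N -> admissible theta ell alpha om w -> (0 < mu om (cyl om w))%E) ->
  0 <= lam (thetai om) -> conf_at (thetai om) ->
  (0 < Dinf theta thetai ell alpha mu om)%E.
Proof.
move=> ttc Oom bip pos l0 conf.
have [HI HB] := bip om Oom.
have [e [e0 He]] : exists e : R, 0 < e /\ forall b, b \in I om -> (e%:E <= mu om (cyl om [:: b]))%E.
  elim: (I om) HI => [|b s IH] HI.
    by exists 1; split => // b; rewrite in_nil.
  have [e [e0 He]] := IH (fun b' bs => HI b' (ltac:(by rewrite in_cons bs orbT))).
  have Wb := HI b (mem_head _ _).
  have p := pos [:: b] erefl (proj2 Wb).
  have p1 : (mu om (cyl om [:: b]) <= 1)%E by apply: probability_le1; exact: mcylw.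
  have fb : mu om (cyl om [:: b]) \is a fin_num.
    by rewrite ge0_fin_numE ?(ltW p) // (le_lt_trans p1) // ltry.
  exists (Num.min e (fine (mu om (cyl om [:: b])))); split.
    by rewrite lt_min e0 /= -lte_fin fineK.
  move=> b'; rewrite in_cons => /orP[/eqP ->|b's].
    by rewrite -[X in (_ <= X)%E](fineK fb) lee_fin ge_min lexx orbT.
  apply: le_trans (He _ b's); rewrite lee_fin ge_min lexx //.
apply: (@lt_le_trans _ _ e%:E); first by rewrite lte_fin.
apply: le_ereal_inf_tmp => _ [c Wc <-].
have [b bI al] := HB c Wc.
apply: (le_trans (He b bI)).
set z := thetai om.
have Wb := HI b bI.
have adm : admissible theta ell alpha z [:: c; b].
  split.
    move=> [|[|i]] //= _; first exact: (proj1 (proj2 Wc) 0%N).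
    by rewrite ttc; exact: (proj1 (proj2 Wb) 0%N).
  by move=> [|i] //= _.
have E1 := @shift_cyl _ _ theta ell alpha z c [:: b] erefl adm.
suff key : (mu (theta z) (cyl (theta z) [:: b]) <= mu (theta z) (shiftn 1 @` cyl z [:: c]))%E.
  by rewrite /z ttc in key.
rewrite -E1.
rewrite (conf c (cyl z [:: c; b])) //; last 2 first.
  exact: mcylw.
  by move=> y; apply: cyl_sub1.
rewrite (conf c (cyl z [:: c])) //; last exact: mcylw.
apply: lee_wpmul2l; first by rewrite lee_fin.
apply: ge0_le_integral_nm => y.
- by move=> _; rewrite lee_fin ltW // expR_gt0.
- by move=> _; rewrite lee_fin ltW // expR_gt0.
- by move=> cy; split; [exact: cyl_sub1 cy|].
Qed.

End Final.
Theorem mainTheorem11 (R : realType) (d : measure_display)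
  (Omega : measurableType d) (P : probability Omega R)
  (theta thetai : Omega -> Omega) (ell : Omega -> option nat)
  (alpha : Omega -> nat -> nat -> bool) (phi : Omega -> Seq -> R)
  (PG : R) (a : nat) (xi : Omega -> Seq) (Ot : set Omega)
  (s : nat -> R) (lam : Omega -> R) (mu : Omega -> probability Seq R)
  (r : R) (kappa : Omega -> R) :
  (* setting of the conformal-measure theorem *)
  base_system P theta thetai ell alpha ->
  top_mixing P theta ell alpha ->
  measurable_potential theta ell alpha phi ->
  Hcond P theta thetai ell alpha phi 2 ->
  S1 P theta ell alpha phi ->
  S2 P theta ell alpha phi ->
  divergence_type P theta ell alpha phi PG a xi Ot ->
  (* lam, mu : the objects given by the conformal-measure theorem *)
  conformal_data P theta ell alpha phi PG xi Ot s lam mu ->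
  (* (H1), with Hoelder data (r, kappa) defining B *)
  holder P theta ell alpha phi 1 r kappa ->
  (\int[P]_om logB thetai kappa r om < +oo)%E ->
  {ae P, forall om, forall (n : nat) (w : seq nat) (x : Seq),
     (1 <= n)%N -> Wn theta ell alpha n om w -> cyl theta ell alpha om w x ->
     Timg theta ell alpha mu om n w / Bf thetai kappa r (iter n theta om)
       <= middle theta ell alpha phi PG lam mu om n w x /\
     middle theta ell alpha phi PG lam mu om n w x
       <= Bf thetai kappa r (iter n theta om) * Timg theta ell alpha mu om n w}
  /\
  (forall (Obi : set Omega) (I : Omega -> seq nat),
     big_image_property P theta thetai ell alpha Obi I ->
     {ae P, forall om, (Obi om -> (0 < Dinf theta thetai ell alpha mu om)%E)} /\
     {ae P, forall om, forall (n : nat) (w : seq nat) (x : Seq),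
        (1 <= n)%N -> Obi (iter n theta om) ->
        Wn theta ell alpha n om w -> cyl theta ell alpha om w x ->
        (Bf thetai kappa r (iter n theta om))^-1 *
            fine (Dinf theta thetai ell alpha mu (iter n theta om))
          <= middle theta ell alpha phi PG lam mu om n w x /\
        middle theta ell alpha phi PG lam mu om n w x
          <= Bf thetai kappa r (iter n theta om)}).
Proof.
move=> [ctt [ttc [mt [mti [pres _]]]]] _ _ _ _ _ _ [_ [_ [_ [Hlam Hmu]]]]
  [r01 [mk [k1 [_ Hv]]]] Bfin.
have r0 : 0 <= r by case/andP: r01 => /ltW.
have k0 : forall om, 0 <= kappa om by move=> om; apply: le_trans (k1 om).
have HL := @logB_ae R d Omega P thetai kappa r mti mk k0 r0 Bfin.
pose Q om := [/\ 0 <= lam om, conf_at theta ell alpha phi PG lam mu om,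
  (forall w, (0 < size w)%N -> admissible theta ell alpha om w ->
     (0 < mu om (cyl theta ell alpha om w))%E) &
  logB thetai kappa r om \is a fin_num].
have G0 : {ae P, forall om, Q om}.
  apply: (@ae_mono R d Omega P _ _ _ (@ae_and R d Omega P _ _ (@ae_and R d Omega P _ _ Hlam Hmu) HL)).
  by move=> om [[[l0 _] [_ [p c]]] f]; split => //; exact: ltW.
have Gk := @ae_iter R d Omega P theta Q mt pres G0.
have Gt := @ae_thetai R d Omega P theta thetai Q ctt mti pres G0.
have P1 : forall om, (forall k, Q (iter k theta om)) ->
  forall (n : nat) (w : seq nat) (x : Seq),
     (1 <= n)%N -> Wn theta ell alpha n om w -> cyl theta ell alpha om w x ->
     Timg theta ell alpha mu om n w / Bf thetai kappa r (iter n theta om)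
       <= middle theta ell alpha phi PG lam mu om n w x /\
     middle theta ell alpha phi PG lam mu om n w x
       <= Bf thetai kappa r (iter n theta om) * Timg theta ell alpha mu om n w.
  move=> om H; apply: part1_om => // k.
  by have [l0 c0 _ f0] := H k.
split.
  by apply: (@ae_mono R d Omega P _ _ _ Gk) => om H; apply: P1.
move=> Obi I [mObi [PObi bip]]; split.
  apply: (@ae_mono R d Omega P _ _ _ (@ae_and R d Omega P _ _ G0 Gt)) => om [[l0 c0 p0 f0] [l1 c1 p1 f1]] Oom.
  exact: (@Dinf_pos R d Omega theta thetai ell alpha phi PG lam mu om Obi I).
apply: (@ae_mono R d Omega P _ _ _ Gk) => om H n w x n1 Ob Ww cx.
have [h1 h2] := P1 om H n w x n1 Ww cx.
case: n n1 Ww h1 h2 Ob => // n _ Ww h1 h2 Ob.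
have [D0 [D1 D2]] := @Dinf_le R d Omega theta thetai ell alpha mu om n w ctt Ww.
move: h1 h2 D0 D1 D2.
rewrite /Timg /=.
set T := mu _ _; set D := Dinf _ _ _ _ _ _; set B := Bf _ _ _ _;
  set M := middle _ _ _ _ _ _ _ _ _ _ _ => h1 h2 D0 D1 D2.
have B0 : 0 < B by rewrite /B /Bf expR_gt0.
have Tfin : T \is a fin_num.
  rewrite ge0_fin_numE; [exact: (le_lt_trans D2 (ltry _)) | exact: measure_ge0].
have Dfin : D \is a fin_num.
  rewrite ge0_fin_numE //; exact: (le_lt_trans D1 (le_lt_trans D2 (ltry _))).
have fDT : fine D <= fine T by apply: fine_le.
have fT1 : fine T <= 1 by have := fine_le Tfin _ D2; apply.
split.
  apply: le_trans h1; rewrite mulrC; apply: ler_wpM2r => //.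
  by rewrite invr_ge0 ltW.
apply: (le_trans h2); rewrite -{2}(mulr1 B); apply: ler_wpM2l => //.
exact: ltW.
Qed.
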